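(* Let $\overline X$ be a compact Hausdorff space, and let $\partial_L,\partial_R\subset\overline X$ be disjoint closed subspaces. Write $\partial\overline X:=\partial_L\cup\partial_R$ and $X:=\overline X\setminus\partial\overline X$. Then the two pointed extensions of $X$ \[ X_\ast:=\ast\amalg_{\partial_L}(\overline X\setminus\partial_R)\qquad\text{and}\qquad \ast\amalg_{\partial_R}(\overline X\setminus\partial_L) \] are both well-pointed, and each is the negation of the other.
   Context: A pointed extension of a locally compact Hausdorff space $X$ is a compactly generated Hausdorff topology on $\ast\amalg X$ extending that of $X$; they form a poset with $X_\ast\le X'_\ast$ iff the identity map is continuous, with initial object $X_+$ and final object $X^+$ (one-point compactification). The negation $X_\ast^\neg$ is the final pointed extension $X'_\ast$ for which the natural map $X_+\to X_\ast\times_{X^+}X'_\ast$ is a homeomorphism. $X_\ast$ is well-pointed if the canonical relation $X_\ast\to X_\ast^{\neg\neg}$ is a homeomorphism. Here $\ast\amalg_{\partial_L}(\overline X\setminus\partial_R)$ denotes the quotient collapsing $\partial_L$ to the point $\ast$. *)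

(* Defs.v *)
(* Topologies on the carrier [option Xt]
   (None = the base point) are handled explicitly as families of open sets,
   since we must compare several topologies on the same carrier. *)
From HB Require Import structures.
From mathcomp Require Import all_boot all_order.
From mathcomp Require Import all_classical.
From mathcomp Require Import topology.

Unset Printing Implicit Defensive.

Local Open Scope classical_set_scope.

Definition is_topology {C : Type} (tau : set (set C)) : Prop :=
  [/\ tau setT,
      (forall A B, tau A -> tau B -> tau (A `&` B)) &
      (forall G : set (set C), G `<=` tau -> tau (\bigcup_(A in G) A))].

Definition hausdorff_top {C : Type} (tau : set (set C)) : Prop :=
  forall x y : C, x <> y ->
    exists U V, [/\ tau U, tau V, U x, V y & U `&` V = set0].

Definition compact_in {C : Type} (tau : set (set C)) (K : set C) : Prop :=
  forall G : set (set C), G `<=` tau -> K `<=` \bigcup_(A in G) A ->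
    exists F : set (set C), [/\ finite_set F, F `<=` G &
                               K `<=` \bigcup_(A in F) A].

Definition kify {C : Type} (tau : set (set C)) : set (set C) :=
  [set A | forall K, compact_in tau K ->
     exists U, tau U /\ A `&` K = U `&` K].

Definition compactly_generated {C : Type} (tau : set (set C)) : Prop :=
  kify tau `<=` tau.

Definition prod_top {C1 C2 : Type} (t1 : set (set C1)) (t2 : set (set C2)) :
  set (set (C1 * C2)) :=
  [set W | forall p, W p ->
     exists U V, [/\ t1 U, t2 V, U p.1, V p.2 & U `*` V `<=` W]].

Definition pts {T : Type} (X : set T) := {x : T | X x}.

Definition subspace_top {T : topologicalType} (X : set T) : set (set (pts X)) :=
  [set A | exists V : set T, open V /\ A = (@proj1_sig T X) @^-1` V].

(* pointed extensions of X: compactly generated Hausdorff topologies on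
   base-point \amalg X (= option (pts X)) whose subspace topology on X is that of X *)
Definition pointed_ext {T : topologicalType} (X : set T)
  (tau : set (set (option (pts X)))) : Prop :=
  [/\ is_topology tau, hausdorff_top tau, compactly_generated tau &
      forall A : set (pts X),
        subspace_top X A <-> exists U, tau U /\ A = Some @^-1` U].

(* X_+ : the base point is isolated *)
Definition plus_top {T : topologicalType} (X : set T) :
  set (set (option (pts X))) :=
  [set U | subspace_top X (Some @^-1` U)].

(* X_* <= X'_* iff the identity X_* -> X'_* is continuous *)
Definition pext_le {C : Type} (tau tau' : set (set C)) : Prop := tau' `<=` tau.

(* Both structure maps to X^+ are the
   identity on the underlying set, so as a set the fiber product is the
   diagonal {(p,p)}; we identify it with * \amalg X via p |-> (p,p). *)
Definition fiber_prod_top {C : Type} (tau tau' : set (set C)) : set (set C) :=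
  kify [set A | exists W, prod_top tau tau' W /\ A = [set p | W (p, p)]].

Definition is_negation {T : topologicalType} (X : set T)
  (tau tau' : set (set (option (pts X)))) : Prop :=
  [/\ pointed_ext X tau',
      fiber_prod_top tau tau' = plus_top X &
      forall tau'', pointed_ext X tau'' ->
        fiber_prod_top tau tau'' = plus_top X -> pext_le tau'' tau'].

(* well-pointed: the canonical map X_* -> X_*^{negneg} (identity on points)
   is a homeomorphism *)
Definition well_pointed {T : topologicalType} (X : set T)
  (tau : set (set (option (pts X)))) : Prop :=
  exists tau1 tau2, [/\ is_negation X tau tau1, is_negation X tau1 tau2 & tau2 = tau].

(* base-point \amalg_{A} (Tbar \ B): the subspace Y := Tbar \ B, with the closed set A
   collapsed to the base point.  Here X = Tbar \ (A u B) (with A, B disjoint),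
   and a point y of Y goes to None if y \in A, to Some y if y \in X.
   Quotient topology: U is open iff its preimage in Y is open in Y. *)
Definition collapse_top {T : topologicalType} (X : set T) (A B : set T) :
  set (set (option (pts X))) :=
  [set U | exists V : set T, open V /\
     forall y : T, ~ B y ->
       (V y <-> (A y /\ U None) \/ exists h : X y, U (Some (exist _ y h)))].

(* Main.v *)
From HB Require Import structures.
Require Import Defs.
From mathcomp Require Import all_boot all_order all_classical topology.
From mathcomp Require finmap.
Local Open Scope classical_set_scope.

Section Gen.
Context {C : Type} {tau : set (set C)}.
Hypothesis htop : is_topology tau.

Lemma top_setT : tau setT.
Proof. by case: htop. Qed.

Lemma top_I A B : tau A -> tau B -> tau (A `&` B).
Proof. by case: htop => _ h _; apply: h. Qed.

Lemma top_bigcup (G : set (set C)) : G `<=` tau -> tau (\bigcup_(A in G) A).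
Proof. by case: htop => _ _ h; apply: h. Qed.

Lemma top_U A B : tau A -> tau B -> tau (A `|` B).
Proof.
move=> hA hB.
have -> : A `|` B = \bigcup_(S in [set A; B]) S.
  apply/seteqP; split=> [x [xA|xB]|x [S [->|->] Sx]]; [by exists A; [left|]|
    by exists B; [right|]|by left|by right].
by apply: top_bigcup => S [->|->].
Qed.

Lemma top_local A : (forall x, A x -> exists U, [/\ tau U, U x & U `<=` A]) ->
  tau A.
Proof.
move=> h.
have -> : A = \bigcup_(U in [set U | tau U /\ U `<=` A]) U.
  apply/seteqP; split=> [x Ax|x [U [_ UA] Ux]]; last exact: UA.
  by have [U [tU Ux UA]] := h x Ax; exists U.
by apply: top_bigcup => U [].
Qed.

Lemma top_bigcap_seq (I : eqType) (s : seq I) (f : I -> set C) :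
  (forall i, i \in s -> tau (f i)) -> tau (\bigcap_(i in [set` s]) f i).
Proof.
elim: s => [|a s IH] h.
  have -> : [set` [::]] = (set0 : set I) by apply/seteqP; split=> x.
  by rewrite bigcap_set0; exact: top_setT.
have -> : [set` (a :: s)] = a |` [set` s].
  apply/seteqP; split=> x /=.
    by rewrite inE => /orP [/eqP ->|xs]; [left|right].
  by case=> [->|xs]; rewrite inE ?eqxx //= xs orbT.
rewrite bigcap_setU1; apply: top_I; first by apply: h; rewrite inE eqxx.
by apply: IH => i ins; apply: h; rewrite inE ins orbT.
Qed.

Lemma top_bigcap_fin (I : choiceType) (D : set I) (f : I -> set C) :
  finite_set D -> (forall i, D i -> tau (f i)) -> tau (\bigcap_(i in D) f i).
Proof.
move=> /finite_seqP [s ->] h; apply: top_bigcap_seq => i ins; apply: h.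
exact: ins.
Qed.

Lemma sep_gen (S K : set C) : compact_in tau K ->
  (forall x, K x -> exists U V, [/\ tau U, tau V, S `<=` U, V x & U `&` V = set0]) ->
  exists U V, [/\ tau U, tau V, S `<=` U, K `<=` V & U `&` V = set0].
Proof.
move=> cK h.
pose H := [set V | tau V /\ exists U, [/\ tau U, S `<=` U & U `&` V = set0]].
have [F [fF FH KF]] : exists F, [/\ finite_set F, F `<=` H &
    K `<=` \bigcup_(A in F) A].
  apply: cK; first by move=> V [].
  move=> x Kx; have [U [V [tU tV SU Vx UV]]] := h x Kx.
  by exists V => //; split=> //; exists U.
have /choice [g hg] : forall V : set C, exists U : set C, H V ->
   [/\ tau U, S `<=` U & U `&` V = set0].
  move=> V; case: (pselect (H V)) => [[_ [U hU]]|nH]; first by exists U.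
  by exists set0.
exists (\bigcap_(V in F) g V), (\bigcup_(V in F) V); split.
- by apply: top_bigcap_fin => // V FV; have [] := hg V (FH V FV).
- by apply: top_bigcup => V FV; have [] := FH V FV.
- by move=> x Sx V FV; have [_ + _] := hg V (FH V FV); apply.
- exact: KF.
- apply/seteqP; split=> // x [xg [V FV Vx]].
  have [_ _ e] := hg V (FH V FV).
  have : (g V `&` V) x by split=> //; exact: xg.
  by rewrite e.
Qed.

Lemma sep_pt_compact p K : hausdorff_top tau -> compact_in tau K -> ~ K p ->
  exists U V, [/\ tau U, tau V, U p, K `<=` V & U `&` V = set0].
Proof.
move=> hH cK nKp.
have [U [V [tU tV pU KV UV]]] : exists U V, [/\ tau U, tau V, [set p] `<=` U,
    K `<=` V & U `&` V = set0].
  apply: sep_gen => // x Kx.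
  have px : p <> x by move=> e; apply: nKp; rewrite e.
  have [U [V [tU tV Up Vx UV]]] := hH p x px.
  by exists U, V; split=> // y ->.
by exists U, V; split=> //; apply: pU.
Qed.

Lemma sep_compact_compact K1 K2 : hausdorff_top tau -> compact_in tau K1 ->
  compact_in tau K2 -> K1 `&` K2 = set0 ->
  exists U V, [/\ tau U, tau V, K1 `<=` U, K2 `<=` V & U `&` V = set0].
Proof.
move=> hH c1 c2 e.
have [V [U [tV tU K2V K1U VU]]] : exists V U, [/\ tau V, tau U, K2 `<=` V,
   K1 `<=` U & V `&` U = set0].
  apply: sep_gen => // x K1x.
  have nK2x : ~ K2 x by move=> K2x; have : (K1 `&` K2) x by []; rewrite e.
  have [U [V [tU tV Ux K2V UV]]] := sep_pt_compact _ _ hH c2 nK2x.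
  by exists V, U; split=> //; rewrite setIC.
by exists U, V; split=> //; rewrite setIC.
Qed.

Lemma compact_setD K W : compact_in tau K -> tau W -> compact_in tau (K `\` W).
Proof.
move=> cK tW G Gt KG.
have [F [fF FG KF]] := cK (W |` G) (fun A => (fun h => match h with
   | or_introl e => ltac:(by rewrite e) | or_intror g => Gt _ g end)) (fun x Kx =>
   match pselect (W x) with
   | left Wx => ex_intro2 _ _ W (or_introl erefl) Wx
   | right nWx => match KG x (conj Kx nWx) with
     ex_intro2 A GA Ax => ex_intro2 _ _ A (or_intror GA) Ax end end).
exists (F `\ W); split; first exact: finite_setD.
  by move=> A [FA nAW]; case: (FG A FA).
move=> x [Kx nWx]; have [A FA Ax] := KF x Kx; exists A => //; split=> //.
by move=> AW; apply: nWx; rewrite -AW.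
Qed.

Lemma compact_setU K1 K2 : compact_in tau K1 -> compact_in tau K2 ->
  compact_in tau (K1 `|` K2).
Proof.
move=> c1 c2 G Gt KG.
have [F1 [f1 F1G K1F]] := c1 G Gt (fun x h => KG x (or_introl h)).
have [F2 [f2 F2G K2F]] := c2 G Gt (fun x h => KG x (or_intror h)).
exists (F1 `|` F2); split; first by rewrite finite_setU.
  by move=> A [|]; [apply: F1G|apply: F2G].
move=> x [/K1F [A FA Ax]|/K2F [A FA Ax]]; exists A => //; [left|right]; done.
Qed.

Lemma cpt_set1 p : compact_in tau [set p].
Proof.
move=> G Gt pG; have [A GA Ap] := pG p erefl.
exists [set A]; split; first exact: finite_set1.
  by move=> B ->.
by move=> x ->; exists A.
Qed.

Lemma lc_cg : (forall p, exists O K, [/\ tau O, O p, O `<=` K & compact_in tau K]) ->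
  compactly_generated tau.
Proof.
move=> h A kA; apply: top_local => p Ap.
have [O [K [tO Op OK cK]]] := h p.
have [U [tU e]] := kA K cK.
exists (O `&` U); split; first exact: top_I.
  split=> //; have : (A `&` K) p by split=> //; exact: OK.
  by rewrite e; case.
move=> x [Ox Ux]; have : (A `&` K) x by rewrite e; split=> //; exact: OK.
by case.
Qed.

End Gen.

Lemma img_compact (C1 C2 : Type) (tau1 : set (set C1)) (tau2 : set (set C2))
  (f : C1 -> C2) (Z : set C1) : compact_in tau1 Z ->
  (forall U, tau2 U -> exists V, tau1 V /\ forall x, Z x -> (V x <-> U (f x))) ->
  compact_in tau2 (f @` Z).
Proof.
move=> cZ hf G Gt fZG.
have /choice [w hw] : forall U : set C2, exists V : set C1, tau2 U ->
   tau1 V /\ forall x, Z x -> (V x <-> U (f x)).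
  move=> U; case: (pselect (tau2 U)) => [/hf [V hV]|nU]; first by exists V.
  by exists set0.
have [F [fF FwG ZF]] := cZ (w @` G) (fun V => fun '(ex_intro2 U GU e) =>
   ltac:(by rewrite -e; case: (hw U (Gt U GU)))) (fun x Zx =>
   match fZG (f x) (ex_intro2 _ _ x Zx erefl) with
   ex_intro2 U GU Ufx => ex_intro2 _ _ (w U) (ex_intro2 _ _ U GU erefl)
     (proj2 ((hw U (Gt U GU)).2 x Zx) Ufx ) end).
have /choice [g hg] : forall V : set C1, exists U : set C2, (w @` G) V ->
   G U /\ w U = V.
  move=> V; case: (pselect ((w @` G) V)) => [[U GU e]|nV]; first by exists U.
  by exists set0.
exists (g @` F); split; first exact: finite_image.
  by move=> _ [V FV <-]; have [] := hg V (FwG V FV).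
move=> _ [x Zx <-]; have [V FV Vx] := ZF x Zx.
exists (g V); first by exists V.
have [GgV e] := hg V (FwG V FV).
by apply/((hw _ (Gt _ GgV)).2 x Zx); rewrite e.
Qed.

Module HFacts.
Import finmap.

Definition ptd {T : topologicalType} (t0 : T) : Type := T.
HB.instance Definition _ (T : topologicalType) (t0 : T) := Topological.on (ptd t0).
HB.instance Definition _ (T : topologicalType) (t0 : T) := isPointed.Build (ptd t0) t0.

Section TFacts.
Variable T : topologicalType.

Lemma open_top : is_topology (@open T).
Proof.
split; [exact: openT| by move=> A B; apply: openI|].
by move=> G GO; apply: bigcup_open => i /GO.
Qed.

Lemma haus_T : hausdorff_space T -> hausdorff_top (@open T).
Proof.
rewrite open_hausdorff => h x y /eqP xy.
have [[U V] /= [xU yV] [oU oV /eqP e]] := h x y xy.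
move/set_mem: xU => xU; move/set_mem: yV => yV; by exists U, V.
Qed.

Lemma compact_T (Z : set T) : compact Z -> compact_in (@open T) Z.
Proof.
move=> cZ0 G GO ZG.
have [Z0|/set0P [t0 _]] := eqVneq Z set0.
  by exists set0; split=> //; rewrite Z0.
have cZ' : @compact (ptd t0) Z := cZ0.
have cZ : @cover_compact (ptd t0) Z by rewrite -compact_cover.
have [D' sD ZD] := cZ (set T) G id (fun i Gi => GO i Gi) ZG.
exists [set` D']; split; first exact: finite_fset.
  by move=> S SD; move: (sD S SD); move/set_mem.
exact: ZD.
Qed.

Lemma compact_T_closed (Z : set T) : compact [set: T] -> closed Z ->
  compact_in (@open T) Z.
Proof.
by move=> cT cZ; apply: compact_T; apply: (subclosed_compact cZ cT).
Qed.

End TFacts.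

End HFacts.
Import HFacts.

Definition qq {T : Type} (X : set T) (y : T) : option (pts X) :=
  match pselect (X y) with left h => Some (exist _ y h) | right _ => None end.

Definition op_of {T : Type} (X : set T) (V : set T) : set (option (pts X)) :=
  [set p | if p is Some x then V (proj1_sig x) else False].
Definition cl_of {T : Type} (X : set T) (V : set T) : set (option (pts X)) :=
  [set p | if p is Some x then V (proj1_sig x) else True].

Lemma qq_some {T : Type} {X : set T} (x : pts X) : qq X (proj1_sig x) = Some x.
Proof.
case: x => y h /=; rewrite /qq; case: pselect => [h'|n]; last by [].
by rewrite (Prop_irrelevance h' h).
Qed.

Lemma qq_none {T : Type} {X : set T} y : ~ X y -> qq X y = None.
Proof. by move=> n; rewrite /qq; case: pselect. Qed.

Lemma qq_X {T : Type} {X : set T} y : X y -> exists x, qq X y = Some x /\ proj1_sig x = y.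
Proof. by move=> h; exists (exist _ y h); rewrite -qq_some. Qed.

Lemma pts_eq {T : Type} {X : set T} (x y : pts X) : proj1_sig x = proj1_sig y -> x = y.
Proof.
by case: x => a ha; case: y => b hb /= e; subst b; rewrite (Prop_irrelevance ha hb).
Qed.

Lemma sub_local {T : topologicalType} (X : set T) (W : set (pts X)) :
  (forall x, W x -> exists O, [/\ open O, O (proj1_sig x) &
     forall z : pts X, O (proj1_sig z) -> W z]) -> subspace_top X W.
Proof.
move=> h; exists (\bigcup_(O in [set O | open O /\ forall z : pts X, O (proj1_sig z) -> W z]) O).
split; first by apply: bigcup_open => O [].
apply/seteqP; split=> [x Wx|x [O [_ OW] Ox]]; last exact: OW.
by have [O [oO Ox OW]] := h x Wx; exists O.
Qed.

Lemma restrict_q {T : topologicalType} (X : set T) (S : set (option (pts X))) :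
  subspace_top X (Some @^-1` S) ->
  exists V, open V /\ forall y, X y -> (V y <-> S (qq X y)).
Proof.
move=> [V [oV e]]; exists V; split=> // y Xy.
have [x [qe ye]] := @qq_X _ X y Xy; rewrite qe -ye.
by have /= -> := congr1 (fun F => F x) e.
Qed.

Section Coll.
Variables (T : topologicalType) (X A B : set T).
Hypothesis hX : forall y, X y <-> ~ A y /\ ~ B y.

Local Notation C := (option (pts X)).
Local Notation q := (qq X).

Lemma collP (U : set C) : collapse_top X A B U <->
  exists V, open V /\ forall y, ~ B y -> (V y <-> U (q y)).
Proof.
split=> [[V [oV hV]]|[V [oV hV]]]; exists V; split=> // y nBy; rewrite hV //.
  case: (pselect (X y)) => [Xy|nXy].
    have [x [-> e]] := @qq_X _ X y Xy; subst y; split=> [[[Ay _]|[h Uh]]|Ux].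
    - by have := (hX _).1 Xy => -[].
    - by have -> : x = exist _ (sval x) h by apply: pts_eq.
    - by right; exists (proj2_sig x); case: x Ux {Xy nBy}.
  rewrite qq_none //; split=> [[[]//|[h]]//|UN]; left; split=> //.
  by apply: contrapT => nA; apply: nXy; apply/hX.
case: (pselect (X y)) => [Xy|nXy].
  have [x [-> e]] := @qq_X _ X y Xy; subst y; split=> [Ux|[[Ay _]|[h Uh]]].
  - by right; exists (proj2_sig x); case: x Ux {Xy nBy}.
  - by have := (hX _).1 Xy => -[].
  - by have -> : x = exist _ (sval x) h by apply: pts_eq.
rewrite qq_none //; split=> [UN|[[]//|[h]]//]; left; split=> //.
by apply: contrapT => nA; apply: nXy; apply/hX.
Qed.

Hypotheses (cT : compact [set: T]) (hT : hausdorff_space T)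
  (clA : closed A) (clB : closed B) (AB : A `&` B = set0).

Lemma openX : open X.
Proof.
have -> : X = ~` (A `|` B).
  apply/seteqP; split=> y; first by move/hX => [nA nB] [|].
  by move=> h; apply/hX; split=> ?; apply: h; [left|right].
exact/closed_openC/closedU.
Qed.

Let tau := collapse_top X A B.

Lemma coll_op V : open V -> tau (op_of X V).
Proof.
move=> oV; apply/collP; exists (V `&` X); split; first exact: openI openX.
move=> y nBy; case: (pselect (X y)) => [Xy|nXy].
  have [x [-> e]] := @qq_X _ X y Xy; subst y => /=.
  by split=> [[]|].
by rewrite qq_none //; split=> [[]|].
Qed.

Lemma coll_cl V : open V -> A `<=` V -> tau (cl_of X V).
Proof.
move=> oV AV; apply/collP; exists V; split=> // y nBy.
case: (pselect (X y)) => [Xy|nXy].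
  by have [x [-> e]] := @qq_X _ X y Xy; subst y.
rewrite qq_none //; split=> // _; apply: AV.
by apply: contrapT => nA; apply: nXy; apply/hX.
Qed.

Lemma coll_restrict U : tau U -> subspace_top X (Some @^-1` U).
Proof.
move=> /collP [V [oV hV]]; exists V; split=> //.
apply/seteqP; split=> x /=.
  by move=> Ux; apply/hV; [have := (hX _).1 (proj2_sig x) => -[]|rewrite qq_some].
by move/hV; rewrite qq_some; apply; have := (hX _).1 (proj2_sig x) => -[].
Qed.

Lemma coll_top : is_topology tau.
Proof.
split.
- by apply/collP; exists setT; split=> //; exact: openT.
- move=> U1 U2 /collP [V1 [o1 h1]] /collP [V2 [o2 h2]].
  apply/collP; exists (V1 `&` V2); split; first exact: openI.
  by move=> y nBy; rewrite /= h1 // h2.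
- move=> G Gt; apply/collP.
  exists (\bigcup_(V in [set V | open V /\ exists U, G U /\
     forall y, ~ B y -> (V y <-> U (q y))]) V).
  split; first by apply: bigcup_open => V [].
  move=> y nBy; split=> [[V [_ [U [GU hU]]] Vy]|[U GU Uq]].
    by exists U => //; apply/hU.
  have /collP [V [oV hV]] := Gt U GU.
  by exists V; [split=> //; exists U|apply/hV].
Qed.

Lemma cA : compact_in (@open T) A. Proof. exact: compact_T_closed. Qed.
Lemma cB : compact_in (@open T) B. Proof. exact: compact_T_closed. Qed.

Lemma notAB (x : pts X) : ~ A (sval x) /\ ~ B (sval x).
Proof. exact/hX/(proj2_sig x). Qed.

Lemma sepNS x : exists U V, [/\ tau U, tau V, U None, V (Some x) & U `&` V = set0].
Proof.
have [U [V [oU oV Ux AV UV]]] := sep_pt_compact (open_top T) _ _ (haus_T T hT) cA (notAB x).1.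
exists (cl_of X V), (op_of X U); split=> //; [exact: coll_cl|exact: coll_op|].
apply/seteqP; split=> // -[z|] [] //= Vz Uz.
by have : (U `&` V) (sval z) by []; rewrite UV.
Qed.

Lemma coll_haus : hausdorff_top tau.
Proof.
move=> [a|] [b|] ab.
- have ab' : sval a <> sval b by move=> e; apply: ab; rewrite (pts_eq _ _ e).
  have [U [V [oU oV Ua Vb UV]]] := haus_T T hT _ _ ab'.
  exists (op_of X U), (op_of X V); split=> //; [exact: coll_op|exact: coll_op|].
  apply/seteqP; split=> // -[z|] [] //= Uz Vz.
  by have : (U `&` V) (sval z) by []; rewrite UV.
- have [U [V [tU tV UN Va UV]]] := sepNS a.
  by exists V, U; split=> //; rewrite setIC.
- exact: sepNS.
- by [].
Qed.

Lemma compact_q Z : compact_in (@open T) Z -> Z `&` B = set0 ->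
  compact_in tau (q @` Z).
Proof.
move=> cZ ZB; apply: img_compact cZ _ => U /collP [V [oV hV]].
exists V; split=> // y Zy; apply: hV => By.
by have : (Z `&` B) y by []; rewrite ZB.
Qed.

Lemma coll_cg : compactly_generated tau.
Proof.
apply: lc_cg; first exact: coll_top.
move=> [x|].
- have nx : ~ (A `|` B) (sval x) by move=> [] ?; have := notAB x => -[].
  have [U [V [oU oV Ux ABV UV]]] := sep_pt_compact (open_top T) _ _ (haus_T T hT)
     (compact_setU _ _ cA cB) nx.
  exists (op_of X U), (q @` (~` V)); split=> //; first exact: coll_op.
    move=> [z|] //= Uz; exists (sval z); last exact: qq_some.
    by move=> Vz; have : (U `&` V) (sval z) by []; rewrite UV.
  apply: compact_q.
    by apply: compact_T_closed => //; exact: open_closedC.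
  by apply/seteqP; split=> // y [nVy By]; apply: nVy; apply: ABV; right.
- have [U [V [oU oV AU BV UV]]] := sep_compact_compact (open_top T) _ _ (haus_T T hT) cA cB AB.
  exists (cl_of X U), (q @` (~` V) `|` [set None]); split=> //.
  + exact: coll_cl.
  + move=> [z|] /= Uz; last by right.
    left; exists (sval z); last exact: qq_some.
    by move=> Vz; have : (U `&` V) (sval z) by []; rewrite UV.
  + apply: compact_setU.
      apply: compact_q.
        by apply: compact_T_closed => //; exact: open_closedC.
      by apply/seteqP; split=> // y [nVy By]; apply: nVy; apply: BV.
    exact: cpt_set1.
Qed.

Lemma coll_pext : pointed_ext X tau.
Proof.
split; [exact: coll_top|exact: coll_haus|exact: coll_cg|].
move=> W; split=> [[V [oV ->]]|[U [tU ->]]]; last exact: coll_restrict.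
exists (op_of X V); split; first exact: coll_op.
by apply/seteqP; split=> x.
Qed.

End Coll.

Definition Jtop {C : Type} (tau tau' : set (set C)) : set (set C) :=
  [set S | exists W, prod_top tau tau' W /\ S = [set p | W (p, p)]].

Section JFacts.
Context {C : Type} (tau tau' : set (set C)).

Lemma J_intro S : (forall p, S p -> exists U V,
  [/\ tau U, tau' V, U p, V p & U `&` V `<=` S]) -> Jtop tau tau' S.
Proof.
move=> h.
exists [set pq | exists U V, [/\ tau U, tau' V, U pq.1, V pq.2 & U `&` V `<=` S]].
split.
  move=> [a b] [U [V [tU tV Ua Vb UV]]]; exists U, V; split=> //.
  by move=> [x y] [/= Ux Vy]; exists U, V.
apply/seteqP; split=> [p Sp|p [U [V [tU tV Up Vp UV]]]]; last exact: UV.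
by have [U [V h']] := h p Sp; exists U, V.
Qed.

Lemma J_elim S p : Jtop tau tau' S -> S p -> exists U V,
  [/\ tau U, tau' V, U p, V p & U `&` V `<=` S].
Proof.
move=> [W [hW ->]] /= Wpp.
have [U [V [tU tV Up Vp UVW]]] := hW (p, p) Wpp.
by exists U, V; split=> // z [Uz Vz]; apply: UVW.
Qed.

End JFacts.

Lemma J_restrict {T : topologicalType} (X : set T)
  (tau tau' : set (set (option (pts X)))) :
  (forall U, tau U -> subspace_top X (Some @^-1` U)) ->
  (forall U, tau' U -> subspace_top X (Some @^-1` U)) ->
  forall S, Jtop tau tau' S -> subspace_top X (Some @^-1` S).
Proof.
move=> r1 r2 S JS; apply: sub_local => x Sx.
have [U [V [tU tV Ux Vx UVS]]] := J_elim _ _ _ _ JS Sx.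
have [O1 [o1 e1]] := r1 U tU; have [O2 [o2 e2]] := r2 V tV.
exists (O1 `&` O2); split; first exact: openI.
  split; [have := congr1 (fun F => F x) e1|have := congr1 (fun F => F x) e2];
    by move=> /= <-.
move=> z [O1z O2z]; apply: UVS; split.
  by have := congr1 (fun F => F z) e1 => /= ->.
by have := congr1 (fun F => F z) e2 => /= ->.
Qed.

Lemma compact_refine {C : Type} (tau J : set (set C)) K : compact_in tau K ->
  (forall S p, J S -> S p -> K p -> exists B, [/\ tau B, B p & B `&` K `<=` S]) ->
  compact_in J K.
Proof.
move=> cK h G GJ KG.
have [F [fF FH KF]] := cK [set B | tau B /\ exists S, G S /\ B `&` K `<=` S]
  (fun B => fun '(conj tB _) => tB) (fun p Kp =>
    match KG p Kp with ex_intro2 S0 GS Sp =>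
      match h S0 p (GJ S0 GS) Sp Kp with ex_intro B (And3 tB Bp BKS) =>
        ex_intro2 _ _ B (conj tB (ex_intro _ S0 (conj GS BKS))) Bp end end).
have /choice [g hg] : forall B : set C, exists S : set C,
    (tau B /\ exists S, G S /\ B `&` K `<=` S) -> G S /\ B `&` K `<=` S.
  move=> B; case: (pselect (tau B /\ exists S, G S /\ B `&` K `<=` S)).
    by move=> [_ [S hS]]; exists S.
  by move=> n; exists set0.
exists (g @` F); split; first exact: finite_image.
  by move=> _ [B FB <-]; have [] := hg B (FH B FB).
move=> p Kp; have [B FB Bp] := KF p Kp.
exists (g B); first by exists B.
by have [_ ] := hg B (FH B FB); apply; split.
Qed.

Section Main.
Variables (T : topologicalType) (X A B : set T).
Hypothesis hX : forall y, X y <-> ~ A y /\ ~ B y.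
Hypotheses (cT : compact [set: T]) (hT : hausdorff_space T)
  (clA : closed A) (clB : closed B) (AB : A `&` B = set0).

Local Notation C := (option (pts X)).
Local Notation q := (qq X).

Let hX' : forall y, X y <-> ~ B y /\ ~ A y.
Proof. by move=> y; rewrite hX; split=> -[]. Qed.
Let BA : B `&` A = set0. Proof. by rewrite setIC. Qed.

Let XA := collapse_top X A B.
Let XB := collapse_top X B A.

Lemma P2 : fiber_prod_top XA XB = plus_top X.
Proof.
apply/seteqP; split=> S.
- move=> kS; apply: sub_local => x Sx.
  have nx : ~ (A `|` B) (sval x) by move=> [] ?; have := (hX _).1 (proj2_sig x) => -[].
  have [O [O' [oO oO' Ox ABO' OO']]] := sep_pt_compact (open_top T) _ _
     (haus_T T hT) (compact_setU _ _ (cA _ _ cT clA) (cA _ _ cT clB)) nx.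
  have ZX : forall y, ~ O' y -> X y.
    by move=> y nO'; apply/hX; split=> h; apply: nO'; apply: ABO'; [left|right].
  have cK : compact_in (Jtop XA XB) (q @` (~` O')).
    apply: img_compact.
      by apply: compact_T_closed => //; exact: open_closedC.
    move=> S' JS'.
    have [V [oV hV]] := @restrict_q _ _ _ (@J_restrict _ _ _ _ (@coll_restrict _ _ _ _ hX)
        (@coll_restrict _ _ _ _ hX') _ JS').
    by exists V; split=> // y /ZX; apply: hV.
  have [S' [JS' e]] := kS _ cK.
  have [V [oV hV]] := @restrict_q _ _ _ (@J_restrict _ _ _ _ (@coll_restrict _ _ _ _ hX)
        (@coll_restrict _ _ _ _ hX') _ JS').
  have Kz : forall z : pts X, O (sval z) -> (q @` (~` O')) (Some z).
    move=> z Oz; exists (sval z); last exact: qq_some.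
    by move=> O'z; have : (O `&` O') (sval z) by []; rewrite OO'.
  exists (O `&` V); split; first exact: openI.
    split=> //; apply/(hV _ (proj2_sig x)); rewrite qq_some.
    have : (S `&` (q @` (~` O'))) (Some x) by split=> //; exact: Kz.
    by rewrite e => -[].
  move=> z [Oz Vz] /=.
  have : (S' `&` (q @` (~` O'))) (Some z).
    by split; [move/(hV _ (proj2_sig z)): Vz; rewrite qq_some|exact: Kz].
  by rewrite -e => -[].
- move=> plusS K cK; exists S; split=> //.
  apply: J_intro => -[x|] Sp; have [V [oV eV]] := plusS.
  + exists (op_of X V), (op_of X V); split.
    * exact: coll_op.
    * exact: coll_op.
    * by have := congr1 (fun F => F x) eV => /= <-.
    * by have := congr1 (fun F => F x) eV => /= <-.
    * move=> [z|] [] //= Vz _.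
      by have := congr1 (fun F => F z) eV => /= ->.
  + have [U [W [oU oW AU BW UW]]] := sep_compact_compact (open_top T) _ _
      (haus_T T hT) (cA _ _ cT clA) (cA _ _ cT clB) AB.
    exists (cl_of X U), (cl_of X W); split=> //.
    * exact: coll_cl.
    * exact: coll_cl.
    * move=> [z|] [] //= Uz Wz.
      by have : (U `&` W) (sval z) by []; rewrite UW.
Qed.

Lemma P3 tau : pointed_ext X tau -> fiber_prod_top XA tau = plus_top X ->
  XB `<=` tau.
Proof.
move=> [ttop thaus tcg tsub] hfib.
have t_rest : forall U, tau U -> subspace_top X (Some @^-1` U).
  by move=> U tU; apply/tsub; exists U.
pose opall := [set p : C | p <> None].
have t_opall : tau opall.
  apply: (top_local ttop) => -[x|] // _.
  have [U [V [tU tV Ux VN UV]]] := thaus (Some x) None ltac:(by []).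
  exists U; split=> // z Uz zN; rewrite zN in Uz.
  by have : (U `&` V) None by []; rewrite UV.
have t_op : forall U, subspace_top X (Some @^-1` U) -> ~ U None -> tau U.
  move=> U /tsub [U' [tU' e]] nUN.
  have -> : U = U' `&` opall.
    apply/seteqP; split=> -[z|] //=.
    - by move=> Uz; split=> //; have := congr1 (fun F => F z) e => /= <-.
    - by move=> [U'z _]; have := congr1 (fun F => F z) e => /= ->.
    - by move=> [].
  exact: top_I.
move=> U XBU; case: (pselect (U None)) => [UN|nUN]; last first.
  by apply: t_op => //; exact: (@coll_restrict _ _ _ _ hX').
apply: tcg => K cK.
have [V [oV hV]] := (@collP _ _ _ _ hX' U).1 XBU.
pose UX := U `&` opall.
have tUX : tau UX.
  apply: t_op; last by move=> [].
  have -> : Some @^-1` UX = Some @^-1` U by apply/seteqP; split=> x //= [].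
  exact: (@coll_restrict _ _ _ _ hX').
case: (pselect (K None)) => [KN|nKN]; last first.
  exists UX; split=> //; apply/seteqP; split=> -[z|] //= [Uz Kz] //; split=> //.
  by case: Uz.
pose K' := K `\` UX.
have cK' : compact_in tau K' by apply: compact_setD.
have K'nU : forall x : pts X, K' (Some x) -> ~ V (sval x).
  move=> x [_ nUX] Vx; apply: nUX; split=> //.
  by move/hV: Vx; rewrite qq_some; apply; have := (hX _).1 (proj2_sig x) => -[].
have R : forall P, XA P -> exists P'', tau P'' /\ forall p, K' p -> (P p <-> P'' p).
  move=> P XAP; case: (pselect (P None)) => [PN|nPN]; last first.
    exists P; split=> //; apply: t_op => //; exact: (@coll_restrict _ _ _ _ hX).
  have [VP [oVP hVP]] := (@collP _ _ _ _ hX P).1 XAP.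
  pose Z := ~` V `&` ~` VP.
  have ZX : forall y, Z y -> X y.
    move=> y [nV nVP]; apply/hX; split=> [Ay|By].
      apply: nVP; apply/hVP; last by rewrite qq_none // => /hX [].
      by move=> By; have : (A `&` B) y by []; rewrite AB.
    apply: nV; apply/hV; last by rewrite qq_none // => /hX [].
    by move=> Ay; have : (A `&` B) y by []; rewrite AB.
  have cKZ : compact_in tau (q @` Z).
    apply: img_compact.
      apply: compact_T_closed => //; apply: closedI; exact: open_closedC.
    move=> S tS; have [W [oW hW]] := @restrict_q _ _ _ (t_rest S tS).
    by exists W; split=> // y /ZX; apply: hW.
  have nKZ : ~ (q @` Z) None.
    by move=> [y /ZX Xy]; have [x [-> _]] := @qq_X _ X y Xy.
  have [W1 [W2 [tW1 tW2 W1N KZW2 W12]]] := sep_pt_compact ttop _ _ thaus cKZ nKZ.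
  pose PX := P `&` opall.
  have tPX : tau PX.
    apply: t_op; last by move=> [].
    have -> : Some @^-1` PX = Some @^-1` P by apply/seteqP; split=> x //= [].
    exact: (@coll_restrict _ _ _ _ hX).
  exists (W1 `|` PX); split; first exact: top_U.
  move=> [x|] K'p; last by split=> _; [left|].
  split=> [Px|[W1x|[]//]]; first by right.
  apply: contrapT => nPx.
  have Zx : Z (sval x).
    split; first exact: K'nU.
    move=> VPx; apply: nPx.
    have nBx : ~ B (sval x) by have := (hX _).1 (proj2_sig x) => -[].
    by have := (hVP _ nBx).1 VPx; rewrite qq_some.
  have : (W1 `&` W2) (Some x) by split=> //; apply: KZW2; exists (sval x); rewrite ?qq_some.
  by rewrite W12.
have cK'J : compact_in (Jtop XA tau) K'.
  apply: (@compact_refine _ tau _ K' cK') => S p JS Sp K'p.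
  have [P [Q [tP tQ Pp Qp PQS]]] := J_elim _ _ _ _ JS Sp.
  have [P'' [tP'' hP'']] := R P tP.
  exists (P'' `&` Q); split; [exact: top_I|by split=> //; apply/hP''|].
  by move=> z [[P''z Qz] K'z]; apply: PQS; split=> //; apply/(hP'' z K'z).
have plusN : plus_top X [set None].
  by exists set0; split; [exact: open0|apply/seteqP; split=> x].
have kN : fiber_prod_top XA tau [set None] by rewrite hfib.
have K'N : K' None by split=> // -[].
have [S0 [JS0 e0]] := kN _ cK'J.
have S0N : S0 None.
  by have : ([set None] `&` K') None by []; rewrite e0 => -[].
have [P [Q [tP tQ PN QN PQS]]] := J_elim _ _ _ _ JS0 S0N.
have [P'' [tP'' hP'']] := R P tP.
exists ((P'' `&` Q) `|` UX); split; first by apply: top_U => //; exact: top_I.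
apply/seteqP; split=> p.
  move=> [Up Kp]; split=> //; case: p Up Kp => [x|] Up Kp; last first.
    by left; split=> //; apply/(hP'' None K'N).
  by right; split.
move=> [[[P''p Qp]|[Up _]] Kp]; last by split.
split=> //; apply: contrapT => nUp.
have K'p : K' p by split=> // -[].
have : (S0 `&` K') p by split=> //; apply: PQS; split=> //; apply/(hP'' p K'p).
by rewrite -e0 => -[/= pN]; rewrite pN in nUp.
Qed.

End Main.

Lemma negation (T : topologicalType) (X A B : set T) :
  (forall y, X y <-> ~ A y /\ ~ B y) -> compact [set: T] -> hausdorff_space T ->
  closed A -> closed B -> A `&` B = set0 ->
  is_negation X (collapse_top X A B) (collapse_top X B A).
Proof.
move=> hX cT hT clA clB AB.
have hX' : forall y, X y <-> ~ B y /\ ~ A y by move=> y; rewrite hX; split=> -[].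
split.
- by apply: coll_pext => //; rewrite setIC.
- exact: P2.
- by move=> tau pe hf; apply: P3.
Qed.

Theorem mainTheorem13 (T : topologicalType) (dL dR : set T) :
  compact [set: T] -> hausdorff_space T ->
  closed dL -> closed dR -> dL `&` dR = set0 ->
  let X := ~` (dL `|` dR) in
  let XL := collapse_top X dL dR in
  let XR := collapse_top X dR dL in
  [/\ well_pointed X XL, well_pointed X XR,
      is_negation X XL XR & is_negation X XR XL].
Proof.
move=> cT hT clL clR LR X XL XR.
have hX : forall y, X y <-> ~ dL y /\ ~ dR y.
  by move=> y; split=> [h|[h1 h2] [|]//]; split=> ?; apply: h; [left|right].
have hX' : forall y, X y <-> ~ dR y /\ ~ dL y by move=> y; rewrite hX; split=> -[].
have RL : dR `&` dL = set0 by rewrite setIC.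
have n1 : is_negation X XL XR by exact: negation.
have n2 : is_negation X XR XL by exact: negation.
by split=> //; [exists XR, XL|exists XL, XR].
Qed.
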